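(* Let $M$ be a matroid on a finite set $S$ with primary flag $T_0\subset\cdots\subset T_k$. Then the set $\mathcal F(M)$ of free separators of $M$ equals $\bigcup_{i=1}^k [T_{i-1},T_i]\cap\mathcal F(M)$, and for each $1\leq i\leq k$, $$[T_{i-1},T_i]\cap \mathcal F(M)=\begin{cases}[T_{i-1},T_i] & \text{if } T_i \text{ covers } T_{i-1} \text{ in } \mathcal D(M),\\ \{T_{i-1},T_i\} & \text{otherwise},\end{cases}$$ so that each such interval is a Boolean algebra.
   Context: A cyclic flat of a matroid is a flat that is a union of circuits. A subset $A\subseteq S$ is a free separator of $M$ if every cyclic flat of $M$ is comparable to $A$ by inclusion; $\mathcal F(M)$ is the set of free separators ordered by inclusion. $\mathcal D(M)$ is the complete sublattice of the Boolean algebra $2^S$ generated by all cyclic flats of $M$ (it contains $\emptyset$ and $S$). A pinchpoint of a poset is an element comparable to every element. The primary flag of $M$ is the chain $T_0\subset\cdots\subset T_k$ of all pinchpoints of $\mathcal D(M)$. For $A\subseteq B\subseteq S$, $[A,B]=\{U\subseteq S: A\subseteq U\subseteq B\}$. *)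

(* Defs.v *)
From mathcomp Require Import all_boot.
Set Implicit Arguments. Unset Strict Implicit. Unset Printing Implicit Defensive.

Section Matroid.
Variable S : finType.
Variable I : {set {set S}}.  (* the family of independent sets *)

Definition matroid : Prop :=
  [/\ set0 \in I,
      (forall A B : {set S}, B \in I -> A \subset B -> A \in I) &
      (forall A B : {set S}, A \in I -> B \in I -> #|A| < #|B| ->
          exists2 e, e \in B :\: A & e |: A \in I)].

Definition mrank (X : {set S}) : nat := \max_(J in I | J \subset X) #|J|.

Definition flat (X : {set S}) : Prop :=
  forall e, e \notin X -> mrank X < mrank (e |: X).

Definition circuit (C : {set S}) : Prop :=
  C \notin I /\ (forall D : {set S}, D \proper C -> D \in I).

Definition cyclic (X : {set S}) : Prop :=
  forall e, e \in X -> exists C, [/\ circuit C, e \in C & C \subset X].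

Definition cyclic_flat (X : {set S}) : Prop := flat X /\ cyclic X.

Definition free_separator (A : {set S}) : Prop :=
  forall Z, cyclic_flat Z -> Z \subset A \/ A \subset Z.

(* D(M): smallest family containing the cyclic flats, set0, setT,
   closed under union and intersection (complete sublattice of 2^S
   generated by cyclic flats; S finite so binary closure suffices) *)
Inductive inD : {set S} -> Prop :=
  | inD_cf Z : cyclic_flat Z -> inD Z
  | inD_0 : inD set0
  | inD_T : inD setT
  | inD_U X Y : inD X -> inD Y -> inD (X :|: Y)
  | inD_I X Y : inD X -> inD Y -> inD (X :&: Y).

Definition pinchpoint (A : {set S}) : Prop :=
  inD A /\ (forall B, inD B -> A \subset B \/ B \subset A).

Definition coversD (X Y : {set S}) : Prop :=
  [/\ inD X, inD Y, X \proper Y &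
      forall U, inD U -> X \proper U -> U \proper Y -> False].

End Matroid.

(* Main.v *)
Require Import Defs.
From mathcomp Require Import all_boot.
From Stdlib Require Import Classical.

Lemma max_ex (S : finType) (P : {set S} -> Prop) :
  (forall X Y, P X -> P Y -> P (X :|: Y)) -> forall X, P X ->
  exists L, P L /\ forall Y, P Y -> Y \subset L.
Proof.
move=> HU X PX.
have : #|~: X| < #|~: X| + 1 by rewrite addn1.
move: (#|~: X| + 1) => n; elim: n X PX => [|n IH] X PX Hn; first by rewrite ltn0 in Hn.
case: (classic (forall Y, P Y -> Y \subset X)) => [H|]; first by exists X.
move=> /not_all_ex_not [Y] H; have [PY /negP nY] := imply_to_and _ _ H.
apply: (IH (X :|: Y)); first exact: HU.
have hp : ~: (X :|: Y) \proper ~: X by rewrite properC properUl.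
exact: leq_trans (proper_card hp) Hn.
Qed.

Lemma min_ex (S : finType) (P : {set S} -> Prop) :
  (forall X Y, P X -> P Y -> P (X :&: Y)) -> forall X, P X ->
  exists L, P L /\ forall Y, P Y -> L \subset Y.
Proof.
move=> HU X PX.
have : #|X| < #|X| + 1 by rewrite addn1.
move: (#|X| + 1) => n; elim: n X PX => [|n IH] X PX Hn; first by rewrite ltn0 in Hn.
case: (classic (forall Y, P Y -> X \subset Y)) => [H|]; first by exists X.
move=> /not_all_ex_not [Y] H; have [PY /negP nY] := imply_to_and _ _ H.
apply: (IH (X :&: Y)); first exact: HU.
exact: leq_trans (proper_card (properIl nY)) Hn.
Qed.

Lemma fs_D (S : finType) (I : {set {set S}}) A :
  free_separator I A -> forall B, inD I B -> B \subset A \/ A \subset B.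
Proof.
move=> HA B; elim=> {B}.
- by move=> Z HZ; apply: HA.
- by left; rewrite sub0set.
- by right; rewrite subsetT.
- move=> X Y _ [h1|h1] _ [h2|h2].
  + by left; rewrite subUset h1 h2.
  + by right; apply: subset_trans h2 _; rewrite subsetUr.
  + by right; apply: subset_trans h1 _; rewrite subsetUl.
  + by right; apply: subset_trans h1 _; rewrite subsetUl.
- move=> X Y _ [h1|h1] _ [h2|h2].
  + by left; apply: subset_trans _ h1; rewrite subsetIl.
  + by left; apply: subset_trans _ h1; rewrite subsetIl.
  + by left; apply: subset_trans _ h2; rewrite subsetIr.
  + by right; rewrite subsetI h1 h2.
Qed.

Arguments fs_D {S I A} _ {B}.

Theorem proposition6p15 (S : finType) (I : {set {set S}}) (HM : matroid I)
  (HS : 0 < #|S|) (k : nat) (T : nat -> {set S})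
  (Hchain : forall i, i < k -> T i \proper T i.+1)
  (Hflag : forall A : {set S}, pinchpoint I A <-> exists2 i, i <= k & A = T i) :
  (forall A : {set S}, free_separator I A <->
     exists i, [/\ 1 <= i <= k, T i.-1 \subset A, A \subset T i
                  & free_separator I A]) /\
  (forall i, 1 <= i <= k -> forall A : {set S},
     ((T i.-1 \subset A) && (A \subset T i) /\ free_separator I A) <->
     ((coversD I (T i.-1) (T i) -> (T i.-1 \subset A) && (A \subset T i)) /\
      (~ coversD I (T i.-1) (T i) -> A = T i.-1 \/ A = T i))).
Proof.
have Tmono : forall i j, i <= j -> j <= k -> T i \subset T j.
  move=> i j ij jk; elim: j ij jk => [|j IH] ij jk.
    by move: ij; rewrite leqn0 => /eqP ->.
  case: (ltngtP i j.+1) ij => // [ij _|-> _]; last by [].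
  apply: subset_trans (IH ij (ltnW jk)) _.
  exact: proper_sub (Hchain _ jk).
have TD : forall j, j <= k -> inD I (T j).
  by move=> j jk; have [] := proj2 (Hflag (T j)) (ex_intro2 _ _ j jk erefl).
have Tpin : forall j, j <= k -> forall B, inD I B -> T j \subset B \/ B \subset T j.
  by move=> j jk; have [] := proj2 (Hflag (T j)) (ex_intro2 _ _ j jk erefl).
have LU : forall A, free_separator I A ->
   exists j l, [/\ j <= k, l <= k, T j \subset A, A \subset T l &
      forall B, inD I B -> B \subset T j \/ T l \subset B].
  move=> A HA.
  have cU : forall X Y, inD I X /\ X \subset A -> inD I Y /\ Y \subset A ->
      inD I (X :|: Y) /\ X :|: Y \subset A.
    by move=> X Y [h1 h2] [h3 h4]; split; [apply: inD_U | rewrite subUset h2 h4].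
  have cI : forall X Y, inD I X /\ A \subset X -> inD I Y /\ A \subset Y ->
      inD I (X :&: Y) /\ A \subset X :&: Y.
    by move=> X Y [h1 h2] [h3 h4]; split; [apply: inD_I | rewrite subsetI h2 h4].
  have [L [[LD LA] Lmax]] := @max_ex _ (fun X => inD I X /\ X \subset A) cU set0 (conj (inD_0 I) (sub0set A)).
  have [U [[UD AU] Umin]] := @min_ex _ (fun X => inD I X /\ A \subset X) cI setT (conj (inD_T I) (subsetT A)).
  have Lp : pinchpoint I L.
    split=> // B BD; case: (fs_D HA BD) => h.
      by right; apply: Lmax.
    by left; apply: subset_trans LA h.
  have Up : pinchpoint I U.
    split=> // B BD; case: (fs_D HA BD) => h.
      by right; apply: subset_trans h AU.
    by left; apply: Umin.
  have [j jk Lj] := proj1 (Hflag L) Lp.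
  have [l lk Ul] := proj1 (Hflag U) Up.
  exists j, l; split; rewrite -?Lj -?Ul //.
  move=> B BD; case: (fs_D HA BD) => h.
    by left; apply: Lmax.
  by right; apply: Umin.
have T0 : T 0 = set0.
  have [j jk Ej] := proj1 (Hflag set0)
     (conj (inD_0 I) (fun B _ => or_introl (sub0set B))).
  by apply/eqP; rewrite -subset0 Ej; apply: Tmono.
have Tk : T k = setT.
  have [j jk Ej] := proj1 (Hflag setT)
     (conj (inD_T I) (fun B _ => or_intror (subsetT B))).
  by apply/eqP; rewrite eqEsubset subsetT /= Ej; apply: Tmono.
have k0 : 0 < k.
  case: (posnP k) => // k0; rewrite k0 in Tk.
  move: HS; rewrite -cardsT -Tk T0 cards0 //.
split.
  move=> A; split; last by case=> i [].
  move=> HA; have [j [l [jk lk jA Al HB]]] := LU A HA.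
  case: (ltnP j k) => jk'.
    exists j.+1; split => //.
    case: (HB _ (TD _ jk')) => h.
      by have := proper_subn (Hchain _ jk'); rewrite h.
    by apply: subset_trans Al h.
  have jk2 : j = k by apply/eqP; rewrite eqn_leq jk jk'.
  exists k; split => //; first by rewrite k0 leqnn.
    by apply: subset_trans _ jA; rewrite jk2; apply: Tmono; rewrite ?leq_pred.
  by rewrite Tk subsetT.
move=> i /andP [i1 ik] A.
have ik' : i.-1 <= k by apply: leq_trans (leq_pred _) ik.
split.
  move=> [/andP [h1 h2] HA]; split; first by rewrite h1 h2.
  move=> Hnc.
  case: (classic (A = T i.-1)) => [->|n1]; first by left.
  case: (classic (A = T i)) => [->|n2]; first by right.
  exfalso; apply: Hnc.
  have [j [l [jk lk jA Al HB]]] := LU A HA.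
  have ji : j <= i.-1.
    case: (leqP j i.-1) => // ij; exfalso; apply: n2.
    apply/eqP; rewrite eqEsubset h2 /=; apply: subset_trans _ jA.
    by apply: Tmono => //; move: ij; case: (i) i1.
  have il : i <= l.
    case: (leqP i l) => // li; exfalso; apply: n1.
    apply/eqP; rewrite eqEsubset h1 andbT; apply: subset_trans Al _.
    by apply: Tmono => //; move: li; case: (i) i1.
  have iS : i.-1 < k by move: ik; case: (i) i1.
  split; try exact: TD.
    by move: (Hchain _ iS); case: (i) i1.
  move=> U UD pU Up; case: (HB _ UD) => h.
    by have := proper_subn pU; rewrite (subset_trans h (Tmono _ _ ji ik')).
  by have := proper_subn Up; rewrite (subset_trans (Tmono _ _ il lk) h).
move=> [Hc Hnc].
case: (classic (coversD I (T i.-1) (T i))) => Hcov.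
  have hA := Hc Hcov; split => //.
  case/andP: hA => h1 h2 Z [ZF ZC].
  have ZD : inD I Z by apply: inD_cf.
  case: (Tpin _ ik' _ ZD) => z1.
    case: (Tpin _ ik _ ZD) => z2; first by right; apply: subset_trans h2 z2.
    case: Hcov => _ _ _ Hcv.
    case: (eqVneq Z (T i.-1)) => [->|ne1]; first by left.
    case: (eqVneq Z (T i)) => [->|ne2]; first by right.
    exfalso; apply: (Hcv Z ZD); rewrite properEneq ?z1 ?z2 ?andbT //.
    by rewrite eq_sym.
  by left; apply: subset_trans z1 h1.
have hcase := Hnc Hcov.
have hsub : (T i.-1 \subset A) && (A \subset T i).
  case: hcase => ->; rewrite subxx ?andbT //=; apply: Tmono => //; exact: leq_pred.
split => // Z [ZF ZC].
have ZD : inD I Z by apply: inD_cf.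
case: hcase => ->.
  by case: (Tpin _ ik' _ ZD) => h; [right|left].
by case: (Tpin _ ik _ ZD) => h; [right|left].
Qed.
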